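(* Let $x_i\in K_i$ for every $1\le i\le N$, let $x\in K$, and let $i_0\in\{1,\dots,N\}$ be such that $x\in K_{i_0}$. Then for every integer $m\le 0$ and every $\epsilon>0$ there exist an integer $k\ge m$ and a set $B\in\mathcal{A}_m$ with $P^m_x(B)<\epsilon$ such that for all $\sigma\in\Sigma\setminus B$ and all $n\ge k$, $$d\big(Z^x_{mn}(\sigma),Y^{x_1\dots x_N}_{mn}(\sigma)\big)\le a^{\frac{n-m+1}{2}}\,d(x,x_{i_0}).$$
   Context: A contractive Markov system (CMS) with average contracting rate $0<a<1$ consists of: a finite directed multigraph $(V,E,i,t)$ with vertex set $V=\{1,\dots,N\}$, finite edge set $E$, and maps $i,t:E\to V$ giving the initial and terminal vertex of each edge; a complete metric space $(K,d)$ partitioned into non-empty Borel sets $K_1,\dots,K_N$; Borel measurable maps $w_e:K\to K$ ($e\in E$) with $w_e(K_{i(e)})\subset K_{t(e)}$; Borel measurable functions $p_e:K\to[0,\infty)$ with $\sum_{e\in E}p_e(x)=1$ for all $x\in K$ and $p_e=0$ on $K\setminus K_{i(e)}$; and such that $\sum_{e\in E}p_e(x)d(w_ex,w_ey)\leq a\,d(x,y)$ for all $x,y\in K_j$, $j=1,\dots,N$. Let $\Sigma:=E^{\mathbb{Z}}$. For $m\le n$ the cylinder $_m[e_m,\dots,e_n]:=\{\sigma\in\Sigma:\sigma_j=e_j,\ m\le j\le n\}$. For an integer $m\le 1$, $\mathcal{A}_m$ is the $\sigma$-algebra generated by the cylinders $_m[e_m,\dots,e_n]$, $n\ge m$. For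 $x\in K$, $P^m_x$ is the probability measure on $(\Sigma,\mathcal{A}_m)$ with $P^m_x(_m[e_m,\dots,e_n])=p_{e_m}(x)\,p_{e_{m+1}}(w_{e_m}x)\cdots p_{e_n}(w_{e_{n-1}}\circ\cdots\circ w_{e_m}x)$. For $x\in K$ and $m\le n$, $Z^x_{mn}(\sigma):=w_{\sigma_n}\circ\cdots\circ w_{\sigma_m}(x)$; for fixed $x_i\in K_i$, $Y^{x_1\dots x_N}_{mn}(\sigma):=w_{\sigma_n}\circ\cdots\circ w_{\sigma_m}(x_{i(\sigma_m)})$. *)

(* Defs.v *)
From HB Require Import structures.
From mathcomp Require Import all_boot all_order all_algebra.
From mathcomp Require Import all_classical all_reals all_analysis.
Set Implicit Arguments. Unset Strict Implicit. Unset Printing Implicit Defensive.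
Import Order.TTheory GRing.Theory Num.Theory.
Local Open Scope classical_set_scope.
Local Open Scope ring_scope.

(* The code space Sigma = E^Z.  The (otherwise irrelevant) element e0 : E is
   only used to equip Sigma with a pointedType structure, which mathcomp's
   generated-sigma-algebra construction requires. *)
Section Sig.
Variables (E : finType) (e0 : E).
Definition Sig (_ : E) : Type := int -> E.
HB.instance Definition _ := Choice.on (Sig e0).
HB.instance Definition _ := isPointed.Build (Sig e0) (fun _ => e0).
End Sig.

Section Metric.
Variables (R : realType) (K : Type) (d : K -> K -> R).

Definition is_metric : Prop :=
  [/\ forall x y, 0 <= d x y,
      forall x y, d x y = 0 <-> x = y,
      forall x y, d x y = d y x &
      forall x y z, d x z <= d x y + d y z].

Definition d_cauchy (u : nat -> K) : Prop :=
  forall eps : R, 0 < eps -> exists N : nat, forall n k : nat,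
    (N <= n)%N -> (N <= k)%N -> d (u n) (u k) < eps.

Definition d_converges (u : nat -> K) (l : K) : Prop :=
  forall eps : R, 0 < eps -> exists N : nat, forall n : nat,
    (N <= n)%N -> d (u n) l < eps.

Definition d_complete : Prop :=
  forall u : nat -> K, d_cauchy u -> exists l, d_converges u l.

Definition d_open (U : set K) : Prop :=
  forall x, U x -> exists r : R, 0 < r /\ [set y | d x y < r] `<=` U.

Definition d_borel : set (set K) := <<s d_open >>.

Definition d_borel_map (f : K -> K) : Prop :=
  forall A, d_borel A -> d_borel (f @^-1` A).

Definition d_borel_fun (f : K -> R) : Prop :=
  forall A : set R, measurable A -> d_borel (f @^-1` A).
End Metric.

Definition is_CMS (R : realType) (V E : finType) (ini ter : E -> V)
  (K : Type) (d : K -> K -> R) (Kp : V -> set K) (w : E -> K -> K)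
  (p : E -> K -> R) (a : R) : Prop :=
  [/\ 0 < a /\ a < 1, is_metric d /\ d_complete d,
      [/\ forall j, Kp j !=set0,
          forall j, d_borel d (Kp j),
          forall j j', j != j' -> Kp j `&` Kp j' = set0 &
          forall x, exists j, Kp j x],
      (forall e, d_borel_map d (w e)) /\
      (forall e x, Kp (ini e) x -> Kp (ter e) (w e x)) /\
      [/\ forall e, d_borel_fun d (p e),
          forall e x, 0 <= p e x,
          forall x, \sum_(e : E) p e x = 1 &
          forall e x, ~ Kp (ini e) x -> p e x = 0] &
      forall j x y, Kp j x -> Kp j y ->
        \sum_(e : E) p e x * d (w e x) (w e y) <= a * d x y].

Fixpoint wcomp (K E : Type) (w : E -> K -> K) (f : nat -> E) (k : nat) (x : K)
  : K :=
  match k with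
  | 0 => x
  | k'.+1 => w (f k') (wcomp w f k' x)
  end.

(* Z^x_{mn}(sigma) = w_{sigma_n} o ... o w_{sigma_m} (x), for m <= n *)
Definition Zmn (K E : Type) (w : E -> K -> K) (s : int -> E) (m n : int)
  (x : K) : K :=
  wcomp w (fun j : nat => s (m + j%:Z)) (absz (n - m)).+1 x.

(* Y^{x_1...x_N}_{mn}(sigma) = w_{sigma_n} o ... o w_{sigma_m}(x_{i(sigma_m)}) *)
Definition Ymn (K V E : Type) (ini : E -> V) (w : E -> K -> K)
  (xs : V -> K) (s : int -> E) (m n : int) : K :=
  Zmn w s m n (xs (ini (s m))).

(* the cylinder _m[f 0, ..., f k] = {sigma | sigma_{m+j} = f j, 0 <= j <= k} *)
Definition cyl (E : finType) (e0 : E) (m : int) (k : nat) (f : nat -> E)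
  : set (Sig e0) :=
  [set s : Sig e0 | forall j : nat, (j <= k)%N -> s (m + j%:Z) = f j].
Arguments cyl {E} e0 m k f.

Definition cylinders (E : finType) (e0 : E) (m : int) : set (set (Sig e0)) :=
  [set C | exists (k : nat) (f : nat -> E), C = cyl e0 m k f].
Arguments cylinders {E} e0 m.

(* A_m as a measurable type: Sigma with the sigma-algebra generated by the
   cylinders starting at m *)
Definition SigA (E : finType) (e0 : E) (m : int) :=
  g_sigma_algebraType (cylinders e0 m).
Arguments SigA {E} e0 m.

Definition cylP (R : realType) (K E : Type) (p : E -> K -> R)
  (w : E -> K -> K) (x : K) (k : nat) (f : nat -> E) : R :=
  \prod_(j < k.+1) p (f j) (wcomp w f j x).

(* Main.v *)
Require Import Defs.
From HB Require Import structures.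
From mathcomp Require Import all_boot all_order all_algebra.
From mathcomp Require Import all_classical all_reals all_analysis.
Import Order.TTheory GRing.Theory Num.Theory.
Local Open Scope classical_set_scope.
Local Open Scope ring_scope.
Set Implicit Arguments. Unset Strict Implicit. Unset Printing Implicit Defensive.

Section Comb.
Variables (R : realType) (V E : finType) (e0 : E) (ini : E -> V)
  (K : Type) (w : E -> K -> K) (p : E -> K -> R).

Fixpoint wapp (g : seq E) (y : K) : K :=
  if g is e :: g' then wapp g' (w e y) else y.
Fixpoint wt (g : seq E) (y : K) : R :=
  if g is e :: g' then p e y * wt g' (w e y) else 1.
Fixpoint words (k : nat) : seq (seq E) :=
  if k is k'.+1 then [seq e :: g | e <- enum E, g <- words k'] else [:: [::]].

Lemma wcomp_shift (f : nat -> E) k y :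
  wcomp w f k.+1 y = wcomp w (fun j => f j.+1) k (w (f 0%N) y).
Proof. by elim: k => [|k IH] //=; rewrite -IH. Qed.

Lemma wcomp_ext (f f' : nat -> E) k y :
  (forall j, (j < k)%N -> f j = f' j) -> wcomp w f k y = wcomp w f' k y.
Proof.
elim: k => [|k IH] H //=; rewrite H // IH // => j Hj; apply: H; exact: ltnW.
Qed.

Lemma wapp_wcomp g y : wapp g y = wcomp w (nth e0 g) (size g) y.
Proof.
elim: g y => [|e g IH] y //; rewrite [wapp _ _]/= IH.
exact: (esym (wcomp_shift (nth e0 (e :: g)) (size g) y)).
Qed.

Lemma wt_prod g y :
  wt g y = \prod_(j < size g) p (nth e0 g j) (wcomp w (nth e0 g) j y).
Proof.
elim: g y => [|e g IH] y /=; first by rewrite big_ord0.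
rewrite big_ord_recl IH; congr (_ * _); apply: eq_bigr => j _.
exact: (congr1 _ (esym (wcomp_shift (nth e0 (e :: g)) j y))).
Qed.

Lemma mem_words g : g \in words (size g).
Proof.
elim: g => [|e g IH] /=; first by rewrite inE.
by apply: (allpairs_f (fun e g => e :: g)) => //; rewrite mem_enum.
Qed.


Lemma sum_words_cons k (F : seq E -> R) :
  \sum_(g <- words k.+1) F g = \sum_(e : E) \sum_(g <- words k) F (e :: g).
Proof. by rewrite /= big_allpairs_dep big_enum. Qed.

Lemma contract_words (d : K -> K -> R) (Kp : V -> set K) (ter : E -> V) (a : R) :
  (forall x y, 0 <= d x y) -> 0 <= a ->
  (forall e x, 0 <= p e x) ->
  (forall e x, ~ Kp (ini e) x -> p e x = 0) ->
  (forall j j', j != j' -> Kp j `&` Kp j' = set0) ->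
  (forall e x, Kp (ini e) x -> Kp (ter e) (w e x)) ->
  (forall j x y, Kp j x -> Kp j y ->
        \sum_(e : E) p e x * d (w e x) (w e y) <= a * d x y) ->
  forall k y z j, Kp j y -> Kp j z ->
  \sum_(g <- words k) wt g y * d (wapp g y) (wapp g z) <= a ^+ k * d y z.
Proof.
move=> d0 a0 p0 pz disj wK con; elim=> [|k IH] y z j yj zj.
  by rewrite /= big_seq1 /= !mul1r.
rewrite sum_words_cons.
apply: (@le_trans _ _ (\sum_(e : E) p e y * (a ^+ k * d (w e y) (w e z)))).
  apply: ler_sum => e _.
  rewrite [X in X <= _](_ : _ = p e y *
     \sum_(g <- words k) wt g (w e y) * d (wapp g (w e y)) (wapp g (w e z))).
    have [ey|ney] := pselect (Kp (ini e) y).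
      have ej : ini e = j.
        case: (eqVneq (ini e) j) => // /disj H.
        have : (Kp (ini e) `&` Kp j) y by []. by rewrite H.
      apply: ler_wpM2l => //; apply: (IH _ _ (ter e)); apply: wK => //.
      by rewrite ej.
    by rewrite pz // !mul0r.
  by rewrite big_distrr /=; apply: eq_bigr => g _; rewrite mulrA.
rewrite exprSr -mulrA.
rewrite (_ : \sum_(e : E) _ = a ^+ k * \sum_(e : E) p e y * d (w e y) (w e z)).
  by rewrite ler_wpM2l ?exprn_ge0 // (con j).
by rewrite big_distrr; apply: eq_bigr => e _; rewrite mulrCA.
Qed.

Lemma words_size k g : g \in words k -> size g = k.
Proof.
elim: k g => [|k IH] g /=; first by rewrite inE => /eqP ->.
by case/allpairsPdep => [e [g' [_ /IH h ->]]] /=; rewrite h.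
Qed.

Lemma wt_ge0 g y : (forall e y, 0 <= p e y) -> 0 <= wt g y.
Proof. by move=> p0; elim: g y => [|e g IH] y //=; rewrite mulr_ge0. Qed.

End Comb.

Lemma le_sum_elem (R : realType) (T : eqType) (l : seq T) (F : T -> R) g :
  (forall h, 0 <= F h) -> g \in l -> F g <= \sum_(h <- l) F h.
Proof.
move=> F0; elim: l => [|h l IH] //=; rewrite inE big_cons.
case/orP => [/eqP ->|/IH H]; first by rewrite lerDl sumr_ge0.
by rewrite (le_trans H) // lerDr.
Qed.


Lemma mem_bigsetU (T : Type) (I : eqType) (l : seq I) (F : I -> set T) g y :
  g \in l -> F g y -> (\big[setU/set0]_(h <- l) F h) y.
Proof.
elim: l => [|h l IH] //; rewrite inE big_cons => /orP[/eqP <- Fy|gl Fy].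
  by left.
by right; apply: IH.
Qed.

Theorem lemma5 (R : realType) (V E : finType) (e0 : E) (ini ter : E -> V)
  (K : Type) (d : K -> K -> R) (Kp : V -> set K) (w : E -> K -> K)
  (p : E -> K -> R) (a : R) :
  is_CMS ini ter d Kp w p a ->
  forall xs : V -> K, (forall i : V, Kp i (xs i)) ->
  forall (x : K) (i0 : V), Kp i0 x ->
  forall m : int, m <= 0 ->
  forall P : probability (SigA e0 m) R,
    (forall (k : nat) (f : nat -> E),
       P (cyl e0 m k f) = (cylP p w x k f)%:E) ->
  forall eps : R, 0 < eps ->
  exists k : int, m <= k /\
  exists B : set (SigA e0 m),
    [/\ measurable B, (P B < eps%:E)%E &
        forall s : SigA e0 m, ~ B s ->
        forall n : int, k <= n ->
          d (Zmn w s m n x) (Ymn ini w xs s m n)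
            <= powR a ((n - m + 1)%:~R / 2) * d x (xs i0)].
Proof.
move=> [[a0 a1] [dm _] [Kne Kb Kdisj Kcov] [_ [wK [_ p0 _ pz]]] con].
move=> xs xsK x i0 xK m m0 P HP eps epos.
case: dm => dge0 dxy dsym dtri.
set r := Num.sqrt a.
have r0 : 0 < r by rewrite sqrtr_gt0.
have r1 : r < 1 by rewrite -sqrtr1 ltr_sqrt // ltr01.
set dd := d x (xs i0).
have dd0 : 0 <= dd by apply: dge0.
pose D (g : seq E) := d (wapp w g x) (wapp w g (xs (ini (nth e0 g 0)))).
pose bad L := [seq g <- words E L.+1 | r ^+ L.+1 * dd < D g].
pose A L : set (SigA e0 m) := \big[setU/set0]_(g <- bad L) cyl e0 m L (nth e0 g).
have mcyl L f : measurable (cyl e0 m L f : set (SigA e0 m)).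
  by apply: sub_sigma_algebra; exists L, f.
have mA L : measurable (A L) by apply: bigsetU_measurable.
have Markov L : \sum_(g <- bad L) wt w p g x <= r ^+ L.+1.
  have S : \sum_(g <- words E L.+1) wt w p g x * D g <= a ^+ L.+1 * dd.
    have -> : \sum_(g <- words E L.+1) wt w p g x * D g =
       \sum_(g <- words E L.+1) wt w p g x * d (wapp w g x) (wapp w g (xs i0)).
      apply: eq_big_seq => g /words_size; case: g => [|e g] //= _.
      rewrite /D /=; case: (eqVneq (ini e) i0) => [-> //|ne].
      rewrite pz ?mul0r // => H.
      by have : (Kp (ini e) `&` Kp i0) x by []; rewrite Kdisj.
    exact: (contract_words dge0 (ltW a0) p0 pz Kdisj wK con L.+1 xK (xsK i0)).
  have a2 : a = r ^+ 2 by rewrite sqr_sqrtr // ltW.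
  have aL : a ^+ L.+1 * dd = r ^+ L.+1 * (r ^+ L.+1 * dd).
    by rewrite a2 -exprM mulrA -exprD addnn -mul2n.
  have M : \sum_(g <- bad L) wt w p g x * (r ^+ L.+1 * dd)
        <= \sum_(g <- bad L) wt w p g x * D g.
    rewrite big_seq [X in _ <= X]big_seq; apply: ler_sum => g.
    rewrite mem_filter => /andP[H _]; apply: ler_wpM2l; first exact: wt_ge0.
    exact: ltW.
  have M2 : \sum_(g <- bad L) wt w p g x * D g
         <= \sum_(g <- words E L.+1) wt w p g x * D g.
    rewrite big_filter big_mkcond /=; apply: ler_sum => g _.
    by case: ifP => // _; rewrite mulr_ge0 ?wt_ge0 //; apply: dge0.
  case: (eqVneq dd 0) => [dd00|ddn0].
    rewrite (le_trans _ (exprn_ge0 _ (ltW r0))) //.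
    apply: (@le_trans _ _ (\sum_(g <- bad L) (0:R))); last by rewrite big1.
    rewrite big_seq [X in _ <= X]big_seq; apply: ler_sum => g gb.
    have Dg : 0 < D g by move: gb; rewrite mem_filter dd00 mulr0 => /andP[].
    rewrite -(pmulr_lle0 _ Dg).
    apply: le_trans (le_sum_elem (F := fun g => wt w p g x * D g) _ gb) _.
      by move=> h; rewrite mulr_ge0 ?wt_ge0 //; apply: dge0.
    by rewrite (le_trans M2 (le_trans S _)) // dd00 mulr0.
  have c0 : 0 < r ^+ L.+1 * dd by rewrite mulr_gt0 ?exprn_gt0 // lt_neqAle eq_sym ddn0.
  rewrite -(ler_pM2r c0) big_distrl /= -aL.
  exact: le_trans M (le_trans M2 S).
have PU L (l : seq (seq E)) : (forall g, g \in l -> size g = L.+1) ->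
   (P (\big[setU/set0]_(g <- l) cyl e0 m L (nth e0 g) : set (SigA e0 m))
     <= (\sum_(g <- l) wt w p g x)%:E)%E.
  elim: l => [|g l IH] Hl; first by rewrite !big_nil measure0.
  rewrite !big_cons EFinD.
  apply: le_trans (measureU2 P (mcyl _ _) (bigsetU_measurable _ _)) _.
    by move=> h _; apply: mcyl.
  apply: leeD; last by apply: IH => h hl; apply: Hl; rewrite inE hl orbT.
  rewrite (_ : wt w p g x = cylP p w x L (nth e0 g)); last first.
    by rewrite /cylP -(Hl g (mem_head _ _)) -wt_prod.
  rewrite le_eqVlt; apply/orP; left; apply/eqP; exact: HP.
have PA L : (P (A L) <= (r ^+ L.+1)%:E)%E.
  apply: le_trans (PU L (bad L) _) _.
    by move=> g; rewrite mem_filter => /andP[_ /words_size].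
  by rewrite lee_fin Markov.
have e1 : 0 < eps * (1 - r) by rewrite mulr_gt0 // subr_gt0.
have [K0 HK0] : exists K0 : nat, r ^+ K0.+1 < eps * (1 - r).
  have rn : `|r| < 1 by rewrite ger0_norm ?ltW.
  move: (cvg_expr rn) => /cvgrPdist_lt /(_ _ e1) [N _ HN].
  exists N; have := HN N.+1 (leqnSn N); rewrite /= sub0r normrN ger0_norm //.
  exact: exprn_ge0 (ltW r0).
have r1p : 0 < 1 - r by rewrite subr_gt0.
have tail n : \sum_(K0 <= i < n) r ^+ i.+1 <= r ^+ K0.+1 / (1 - r).
  have T t : \sum_(K0 <= i < K0 + t) r ^+ i.+1 * (1 - r)
             = r ^+ K0.+1 - r ^+ (K0 + t).+1.
    elim: t => [|t IH]; first by rewrite addn0 big_geq // subrr.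
    rewrite addnS big_nat_recr /= ?leq_addr // IH mulrBr mulr1 -exprSr.
    by rewrite addrA subrK.
  case: (leqP n K0) => [nK|Kn].
    by rewrite big_geq // divr_ge0 ?exprn_ge0 ?ltW.
  rewrite -(ler_pM2r r1p) divfK ?gt_eqF // big_distrl /=.
  rewrite -(subnKC (ltnW Kn)) T lerBlDr lerDl.
  exact: exprn_ge0 (ltW r0).
exists (m + K0%:Z); split; first by rewrite lerDl.
exists (\bigcup_(L in ~` `I_K0) A L); split.
- by apply: bigcup_measurable => L _; apply: mA.
- apply: le_lt_trans (measure_sigma_subadditive_tail P mA _ (@subset_refl _ _)) _.
    by apply: bigcup_measurable => L _; apply: mA.
  apply: (@le_lt_trans _ _ (r ^+ K0.+1 / (1 - r))%:E).
    apply: lime_le; first by apply: is_cvg_nneseries => i _ _; apply: measure_ge0.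
    apply: nearW => n.
    apply: (@le_trans _ _ (\sum_(K0 <= i < n) (r ^+ i.+1)%:E)%E).
      by apply: lee_sum => i _; apply: PA.
    by rewrite sumEFin lee_fin tail.
  by rewrite lte_fin ltr_pdivrMr.
move=> s Bs n kn.
set L := absz (n - m).
have nm : n - m = L%:Z.
  by rewrite /L gez0_abs // subr_ge0 (le_trans _ kn) // lerDl.
have KL : (K0 <= L)%N by rewrite -lez_nat -nm lerBrDl.
have nAL : ~ A L s.
  move=> H; apply: Bs; exists L => //=; apply/negP; rewrite -leqNgt //.
set g := mkseq (fun j : nat => s (m + j%:Z)) L.+1.
have gw : g \in words E L.+1 by have := mem_words g; rewrite size_mkseq.
have sg : cyl e0 m L (nth e0 g) s by move=> j jL; rewrite nth_mkseq.
have Dg : D g <= r ^+ L.+1 * dd.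
  rewrite leNgt; apply/negP => H; apply: nAL.
  by apply: (mem_bigsetU (g := g)) => //; rewrite mem_filter H gw.
have ZE y : Zmn w s m n y = wapp w g y.
  rewrite /Zmn -/L (wapp_wcomp e0) size_mkseq; apply: wcomp_ext => j jl.
  by rewrite nth_mkseq.
have g0 : nth e0 g 0 = s m by rewrite nth_mkseq // addr0.
rewrite /Ymn !ZE -g0; apply: le_trans Dg _.
rewrite le_eqVlt; apply/orP; left; apply/eqP; congr (_ * _).
rewrite nm (_ : (L%:Z + 1)%:~R = (L.+1)%:R :> R); last by rewrite intrD natr1.
rewrite mulrC powRrM powR_mulrn ?powR_ge0 // powR12_sqrt //; exact: ltW.
Qed.
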